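(* Every vertex of a friendship digraph has outdegree at least $2$.
   Context: All digraphs are finite and have neither loops nor parallel arcs (a pair of opposite arcs $(u,v)$ and $(v,u)$ is allowed). A friendship digraph is a nontrivial digraph (at least two vertices) in which any two distinct vertices have exactly one common out-neighbor. *)

(* Defs.v *)
From mathcomp Require Import all_boot.
Set Implicit Arguments. Unset Strict Implicit. Unset Printing Implicit Defensive.

(* A digraph on a finite vertex type V is given by its arc relation [arc : rel V];
   "no parallel arcs" is automatic for a relation; "no loops" = irreflexive. *)
Definition loopless (V : finType) (arc : rel V) : Prop := forall v, ~~ arc v v.

Definition outnb (V : finType) (arc : rel V) (v : V) : {set V} := [set w | arc v w].

Definition outdeg (V : finType) (arc : rel V) (v : V) : nat := #|outnb arc v|.

Definition friendship_digraph (V : finType) (arc : rel V) : Prop :=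
  [/\ loopless arc, 1 < #|V| &
      forall u v : V, u != v -> #|outnb arc u :&: outnb arc v| = 1].

(* Main.v *)
Require Import Defs.
From mathcomp Require Import all_boot.

Lemma common_nb (V : finType) (arc : rel V) (u v : V) :
  friendship_digraph arc -> u != v -> exists w, arc u w && arc v w.
Proof.
case=> _ _ H neq; have := H u v neq => c.
have : 0 < #|outnb arc u :&: outnb arc v| by rewrite c.
case/card_gt0P=> w; rewrite !inE => hw; by exists w.
Qed.

Theorem lemma2p1 (V : finType) (arc : rel V) :
  friendship_digraph arc -> forall v : V, 2 <= outdeg arc v.
Proof.
move=> F v; have F' := F; case: F' => ll two _.
have [u nuv] : exists u, u != v.
  case/card_gt1P: two => a [b [_ _ nab]].
  case: (eqVneq a v) => [eav|nav]; last by exists a.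
  by exists b; rewrite -eav eq_sym.
have [w /andP [_ vw]] := common_nb _ _ _ _ F nuv.
have nvw : v != w by apply/eqP => e; move: (ll v); rewrite {2}e vw.
have [x /andP [vx wx]] := common_nb _ _ _ _ F nvw.
have nwx : w != x by apply/eqP => e; move: (ll w); rewrite {2}e wx.
have sub : [set w; x] \subset outnb arc v.
  by apply/subsetP => y; rewrite !inE => /orP [] /eqP ->.
by have := subset_leq_card sub; rewrite cards2 nwx /outdeg.
Qed.
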